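(* Let $q$ be a prime power and $t\ge 2$ an integer. Then $OCAN(t,q+1,t,q-1)\le q^{t}-2$.
   Context: For positive integers $m,s$, the RT poset $[m\times s]$ is the set $\{1,\ldots,ms\}$ partitioned into $m$ blocks $B_i=\{is+1,\ldots,(i+1)s\}$ ($i=0,\ldots,m-1$); each block is a chain under the usual order of the integers, and elements of different blocks are incomparable. An anti-ideal is the complement of an ideal (a down-closed set). Given an $N\times n$ array over an alphabet $V$ of size $v$, a set of $t$ columns is covered if in the $N\times t$ subarray formed by those columns every $t$-tuple over $V$ appears as a row at least once. For positive integers with $2\le t\le ms$, an ordered covering array $OCA(N;t,m,s,v)$ is an $N\times ms$ array over an alphabet of size $v$ with columns labeled by the elements of $[m\times s]$ such that for every anti-ideal $J$ of size $t$ the set of columns labeled by $J$ is covered; $OCAN(t,m,s,v)$ is the smallest $N$ for which an $OCA(N;t,m,s,v)$ exists. *)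

(* Defs.v *)
From mathcomp Require Import all_boot all_algebra matrix.
Set Implicit Arguments. Unset Strict Implicit. Unset Printing Implicit Defensive.

(* The RT poset [m x s]: its ms elements are represented 0-based by 'I_(m*s),
   the element k : 'I_(m*s) standing for k+1.  Block B_i consists of the k with
   k %/ s = i; inside a block the order is the integer order, and elements of
   different blocks are incomparable. *)
Definition rt_le (m s : nat) (x y : 'I_(m * s)) : bool :=
  (x %/ s == y %/ s) && (x <= y).

Definition rt_ideal (m s : nat) (I : {set 'I_(m * s)}) : bool :=
  [forall x, forall y, (rt_le x y && (y \in I)) ==> (x \in I)].

Definition rt_anti_ideal (m s : nat) (J : {set 'I_(m * s)}) : bool :=
  rt_ideal (~: J).

Definition covered (v N n : nat) (A : 'M['I_v]_(N, n)) (J : {set 'I_n}) : bool :=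
  [forall f : {ffun 'I_n -> 'I_v}, [exists r : 'I_N, [forall c in J, A r c == f c]]].

Definition is_OCA (t m s v N : nat) (A : 'M['I_v]_(N, m * s)) : bool :=
  [forall J : {set 'I_(m * s)}, (rt_anti_ideal J && (#|J| == t)) ==> covered A J].

Definition OCA_exists (t m s v N : nat) : bool :=
  [exists A : 'M['I_v]_(N, m * s), is_OCA t A].

(* The array whose rows are all the words over the alphabet is an OCA. *)
Lemma OCA_exists_some (t m s v : nat) : exists N, OCA_exists t m s v N.
Proof.
exists #|{ffun 'I_(m * s) -> 'I_v}|.
apply/existsP; exists (\matrix_(i, j) (enum_val i : {ffun 'I_(m * s) -> 'I_v}) j)%R.
apply/forallP => J; apply/implyP => _.
apply/forallP => f; apply/existsP; exists (enum_rank f).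
by apply/forall_inP => c _; rewrite mxE enum_rankK.
Qed.

Definition OCAN (t m s v : nat) : nat := ex_minn (OCA_exists_some t m s v).

(* Main.v *)
Require Import Defs.
From mathcomp Require Import all_boot all_algebra matrix.
From mathcomp Require Import finfield zify.
Set Implicit Arguments. Unset Strict Implicit. Unset Printing Implicit Defensive.
Import GRing.Theory.
Section PolyAux.
Local Open Scope ring_scope.

Lemma prod_mup_dvd (F : fieldType) (s : seq F) (f : {poly F}) : f != 0 ->
  (forall x, (count_mem x s <= mup x f)%N) ->
  \prod_(y <- s) ('X - y%:P) %| f.
Proof.
elim: s f => [|y s IH] f fn0 H; first by rewrite big_nil dvd1p.
have : (1 <= mup y f)%N by apply: leq_trans (H y); rewrite /= eqxx.
rewrite mup_geq // expr1 => /dvdpP [g fE].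
have gn0 : g != 0 by apply: contraNneq fn0; rewrite fE => ->; rewrite mul0r.
have Hg : forall x, (count_mem x s <= mup x g)%N.
  move=> x; have := H x; rewrite /= fE mupM ?polyXsubC_eq0 //.
  have := mup_XsubCX 1 x y; rewrite expr1 => ->.
  by rewrite eq_sym; case: (x == y); rewrite ?addn1 ?addn0.
by rewrite big_cons fE mulrC dvdp_mul // IH.
Qed.

Lemma size_mup (F : fieldType) (s : seq F) (f : {poly F}) : f != 0 ->
  (forall x, (count_mem x s <= mup x f)%N) -> (size s < size f)%N.
Proof.
move=> fn0 H; have := dvdp_leq fn0 (prod_mup_dvd fn0 H).
by rewrite size_prod_XsubC.
Qed.

Lemma dvd_shift (F : fieldType) (f : {poly F}) (x : F) (a : nat) :
  (forall d, (d < a)%N -> (f \Po ('X + x%:P))`_d = 0) ->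
  ('X - x%:P) ^+ a %| f.
Proof.
move=> H; set g := f \Po ('X + x%:P).
have tk : take_poly a g = 0.
  by apply/polyP => i; rewrite coef_take_poly coef0; case: ifP => // /H.
have gE : g = drop_poly a g * 'X^a by rewrite -{1}(poly_take_drop a g) tk add0r.
rewrite -(comp_polyXaddC_K f x) -/g gE comp_polyM comp_Xn_poly.
exact: dvdp_mull.
Qed.

End PolyAux.

Section Construction.
Variable F : finFieldType.
Variable t : nat.
Hypothesis t2 : (2 <= t)%N.
Local Notation q := #|F|.
Local Notation n := ((#|F| + 1) * t)%N.

Definition pt (i : nat) : F := nth 0%R (enum F) i.
Definition Ep (f : {poly F}) (k : nat) : F :=
  if (k %/ t < q)%N then ((f \Po ('X + (pt (k %/ t))%:P))`_(t.-1 - k %% t))%R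
  else (f`_(k %% t))%R.

Lemma EpB f g k : Ep (f - g)%R k = (Ep f k - Ep g k)%R.
Proof. by rewrite /Ep; case: ifP; rewrite ?comp_polyB coefB. Qed.

Lemma anti_up (J : {set 'I_n}) : rt_anti_ideal J ->
  forall k k' : 'I_n, k \in J -> k %/ t = k' %/ t -> (k <= k')%N -> k' \in J.
Proof.
move=> /forallP H k k' kJ e le; apply: contraTT kJ => nk'.
have /forallP /(_ k') /implyP := H k.
by rewrite /rt_le e eqxx le !in_setC nk' => /(_ isT).
Qed.

Definition acnt (J : {set 'I_n}) (i : nat) := #|[set k in J | k %/ t == i]|.

Lemma t0 : (0 < t)%N. Proof. by apply: leq_trans t2. Qed.

Lemma block_top J : rt_anti_ideal J -> forall i d (k : 'I_n),
  (d < acnt J i)%N -> (k : nat) = (i * t + (t.-1 - d))%N -> k \in J.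
Proof.
move=> aJ i d k da kv; apply/negPn/negP => nkJ.
have tp := t0.
have kdiv : k %/ t = i by rewrite kv divnMDl // divn_small ?addn0 //; lia.
suff : (acnt J i <= d)%N by lia.
rewrite /acnt.
apply: leq_trans (_ : #|(fun j : 'I_d => insubd k (k + j.+1)%N) @: [set: 'I_d]| <= d)%N.
  apply: subset_leq_card; apply/subsetP => k'; rewrite inE => /andP [k'J /eqP k'div].
  have kk' : (k < k')%N.
    rewrite ltnNge; apply/negP => le; apply: (negP nkJ).
    by apply: (anti_up aJ k'J) => //; rewrite k'div kdiv.
  have k'lt : (k' < i * t + t)%N.
    by rewrite {1}(divn_eq k' t) k'div ltn_add2l ltn_pmod.
  have jlt : (k' - k.+1 < d)%N by lia.
  apply/imsetP; exists (Ordinal jlt); first by rewrite inE.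
  apply: val_inj; rewrite /= val_insubd.
  have -> : (k + (k' - k.+1).+1 = k')%N by lia.
  by rewrite (ltn_ord k').
by rewrite (leq_trans (leq_imset_card _ _)) // cardsT card_ord.
Qed.

Lemma acnt_sum J : (\sum_(i < q.+1) acnt J i)%N = #|J|.
Proof.
rewrite -sum1_card (partition_big (fun k : 'I_n => (inord (k %/ t) : 'I_q.+1)) xpredT) //=.
apply: eq_bigr => i _; rewrite /acnt -sum1_card; apply: eq_bigl => k; rewrite inE.
have tp := t0.
have kq : (k %/ t < q.+1)%N by rewrite ltn_divLR // -[q.+1]addn1 ltn_ord.
by rewrite -val_eqE /= inordK.
Qed.

Lemma acnt_le J i : (acnt J i <= #|J|)%N.
Proof. by apply: subset_leq_card; apply/subsetP => k; rewrite inE => /andP[]. Qed.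

Lemma kernel J (f : {poly F}) : rt_anti_ideal J -> #|J| = t -> (size f <= t)%N ->
  (forall k : 'I_n, k \in J -> Ep f k = 0%R) -> f = 0%R.
Proof.
move=> aJ cJ sf H; apply/eqP/negPn/negP => fn0.
have tp := t0.
pose a := acnt J.
have asum : (\sum_(i < q) a i + a q)%N = t by rewrite -cJ -acnt_sum big_ord_recr.
have ale i : (a i <= t)%N by rewrite -cJ acnt_le.
have col : forall i r, (i <= q)%N -> (r < t)%N -> {k : 'I_n | (k : nat) = i * t + r}%N.
  move=> i r iq rt; have lt : (i * t + r < n)%N by nia.
  by exists (Ordinal lt).
have fin : forall i, (i < q)%N -> (a i <= mup (pt i) f)%N.
  move=> i iq; rewrite mup_geq //; apply: dvd_shift => d da.
  have dt : (d < t)%N by apply: leq_trans da (ale i).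
  have [k kv] := col i (t.-1 - d)%N (ltnW iq) ltac:(lia).
  have := H k (block_top aJ da kv); rewrite /Ep kv divnMDl // divn_small ?addn0 ?iq; last by lia.
  rewrite modnMDl modn_small; last by lia.
  by have -> : (t.-1 - (t.-1 - d) = d)%N by lia.
have inf : (size f <= t - a q)%N.
  apply/leq_sizeP => j jge; case: (ltnP j t) => jt; last by apply: (leq_sizeP _ _ sf).
  have [k kv] := col q j (leqnn q) jt.
  have dq : (t.-1 - j < a q)%N by lia.
  have e : (t.-1 - (t.-1 - j) = j)%N by lia.
  rewrite -e in kv.
  have := H k (block_top aJ dq kv); rewrite /Ep kv e divnMDl // divn_small // addn0 ltnn.
  by rewrite modnMDl modn_small.
pose s := flatten [seq nseq (a i) (pt i) | i <- iota 0 q].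
have ss : size s = (\sum_(i < q) a i)%N.
  rewrite size_flatten /shape -map_comp sumnE big_map.
  rewrite (eq_bigr a); last by move=> i _; rewrite /= size_nseq.
  by rewrite -(big_mkord (fun _ => true) a) /index_iota subn0.
have cnt : forall y, (count_mem y s <= mup y f)%N.
  move=> y; have yin : y \in enum F by rewrite mem_enum.
  set j := index y (enum F).
  have jq : (j < q)%N by rewrite cardE index_mem.
  have yj : pt j = y by rewrite /pt nth_index.
  rewrite count_flatten -map_comp sumnE big_map -yj.
  rewrite (eq_big_seq (fun i => (i == j) * a i)%N); last first.
    move=> i; rewrite mem_iota add0n => /andP [_ iq].
    rewrite /= count_nseq /= /pt nth_uniq ?enum_uniq // -?cardE //.
  rewrite (bigD1_seq j); [|by rewrite mem_iota add0n jq|exact: iota_uniq].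
  rewrite eqxx mul1n.
  have -> : (\sum_(i <- iota 0 q | i != j) (i == j) * a i = 0)%N.
    by apply: big1 => i /negbTE ->.
  apply: leq_trans (fin j jq); exact: (eq_leq (addn0 (a j))).
have := size_mup fn0 cnt; rewrite ss => HH.
by move: (leq_trans HH inf); rewrite -{1}asum addnK ltnn.
Qed.


Definition Pc (c : {ffun 'I_t -> F}) : {poly F} := (\poly_(i < t) odflt 0 (omap c (insub i)))%R.

Lemma surj J : rt_anti_ideal J -> #|J| = t -> forall tau : {ffun 'I_n -> F},
  exists c : {ffun 'I_t -> F}, forall k, k \in J -> Ep (Pc c) k = tau k.
Proof.
move=> aJ cJ tau.
pose psi := fun c : {ffun 'I_t -> F} => [ffun i : 'I_#|J| => Ep (Pc c) (enum_val i)].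
have psi_inj : injective psi.
  move=> c c' e.
  have : (Pc c - Pc c')%R = 0%R.
    apply: (kernel aJ cJ).
      by apply/leq_sizeP => j jt; rewrite coefB !coef_poly ltnNge jt /= subrr.
    move=> k kJ; rewrite EpB.
    have := congr1 (fun g : {ffun 'I_#|J| -> F} => g (enum_rank_in kJ k)) e; rewrite /psi !ffunE enum_rankK_in // => ->.
    by rewrite subrr.
  move/eqP; rewrite subr_eq0 => /eqP e2; apply/ffunP => i.
  by have := congr1 (fun p : {poly F} => (p`_i)%R) e2; rewrite /Pc !coef_poly ltn_ord valK.
have [g psiK gK] : bijective psi.
  by apply: inj_card_bij psi_inj _; rewrite !card_ffun !card_ord cJ.
exists (g [ffun i => tau (enum_val i)]) => k kJ.
have := congr1 (fun h : {ffun 'I_#|J| -> F} => h (enum_rank_in kJ k)) (gK [ffun i => tau (enum_val i)]).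
by rewrite /psi /= !ffunE enum_rankK_in.
Qed.

Lemma Ep0 k : Ep 0%R k = 0%R.
Proof. by rewrite /Ep comp_poly0 !coef0 if_same. Qed.

Lemma Ep1 k : (Ep 1%R k == 0%R) || (Ep 1%R k == 1%R).
Proof.
rewrite /Ep -polyC1 comp_polyC.
by case: ifP => _; rewrite coefC; case: ifP => _; rewrite eqxx ?orbT.
Qed.


Lemma q2 : (1 < q)%N.
Proof. by apply/card_gt1P; exists 0%R, 1%R; split => //; rewrite eq_sym oner_neq0. Qed.

Lemma q1pos : (0 < q - 1)%N.
Proof. by have := q2; rewrite subn_gt0. Qed.

Definition F1 := [set~ (1%R : F)].
Definition e1 := enum F1.
Lemma size_e1 : size e1 = (q - 1)%N.
Proof. by rewrite /e1 -cardE cardsC1 subn1. Qed.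

Definition s0 : 'I_(q - 1) := Ordinal q1pos.
Definition hinv (s : 'I_(q - 1)) : F := nth 0%R e1 s.
Definition h (x : F) : 'I_(q - 1) :=
  insubd s0 (index (if x == 1%R then 0%R else x) e1).

Lemma hinv_neq1 s : hinv s != 1%R.
Proof.
have : hinv s \in e1 by rewrite mem_nth // size_e1.
by rewrite mem_enum !inE.
Qed.

Lemma hK s : h (hinv s) = s.
Proof.
rewrite /h (negbTE (hinv_neq1 s)) /hinv index_uniq ?enum_uniq ?size_e1 //.
by apply: val_inj; rewrite val_insubd ltn_ord.
Qed.

Lemma h10 : h 1%R = h 0%R.
Proof. by rewrite /h eqxx if_same. Qed.

Definition c0 : {ffun 'I_t -> F} := [ffun => 0%R].
Definition u1 : {ffun 'I_t -> F} := [ffun i : 'I_t => if (i : nat) == 0%N then 1%R else 0%R].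

Lemma Pc0 : Pc c0 = 0%R.
Proof.
apply/polyP => i; rewrite /Pc coef_poly coef0.
by case: (insub i) => [o|] /=; rewrite ?ffunE !if_same.
Qed.

Lemma Pu1 : Pc u1 = 1%R.
Proof.
apply/polyP => i; rewrite /Pc coef_poly coef1.
case: ltnP => it.
  by rewrite insubT /= ffunE /=; case: (i == 0%N).
have tp := t2.
by have -> : (i == 0)%N = false by apply/eqP; lia.
Qed.

Definition S : {set {ffun 'I_t -> F}} := ([set: {ffun 'I_t -> F}] :\ c0) :\ u1.

Lemma u1c0 : u1 != c0.
Proof.
apply/eqP => /ffunP /(_ (Ordinal t0)); rewrite !ffunE /=.
by apply/eqP; exact: oner_neq0.
Qed.

Lemma cardS : #|S| = (q ^ t - 2)%N.
Proof.
have := cardsD1 u1 ([set: {ffun 'I_t -> F}] :\ c0).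
have := cardsD1 c0 [set: {ffun 'I_t -> F}].
rewrite !inE u1c0 cardsT card_ffun card_ord /= -/S.
by move=> -> ->; rewrite addnA addnC addnK.
Qed.

Definition Amx : 'M['I_(q - 1)]_(#|S|, n) :=
  (\matrix_(r, k) h (Ep (Pc (enum_val r)) k))%R.

Lemma goodrow (J : {set 'I_n}) (f : {ffun 'I_n -> 'I_(q - 1)}) c :
  c \in S -> (forall k, k \in J -> h (Ep (Pc c) k) = f k) ->
  [exists r : 'I_#|S|, [forall k in J, Amx r k == f k]].
Proof.
move=> cS H; apply/existsP; exists (enum_rank_in cS c).
by apply/forall_inP => k kJ; rewrite mxE enum_rankK_in // H.
Qed.

Lemma OCA_main : OCA_exists t (q + 1) t (q - 1) #|S|.
Proof.
apply/existsP; exists Amx; apply/forallP => J; apply/implyP => /andP [aJ /eqP cJ].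
apply/forallP => f.
pose tau := [ffun k => hinv (f k)].
have inS c : c != c0 -> c != u1 -> c \in S by move=> a b; rewrite !inE a b.
case: (boolP [forall k in J, tau k == 0%R]) => [/forall_inP Z | NZ].
  have /card_gt1P [k1 [k2 [k1J k2J k12]]] : (1 < #|J|)%N by rewrite cJ.
  have [c1 H1] := surj aJ cJ [ffun k => if k == k1 then 1%R else tau k].
  have [c2 H2] := surj aJ cJ [ffun k => if k == k2 then 1%R else tau k].
  have good : forall k0 c, (forall k, k \in J ->
      Ep (Pc c) k = [ffun k => if k == k0 then 1%R else tau k] k) ->
      forall k, k \in J -> h (Ep (Pc c) k) = f k.
    move=> k0 c Hc k kJ; rewrite Hc // ffunE; case: eqP => _.
      by rewrite h10; move: (eqP (Z k kJ)); rewrite /tau ffunE => <-; exact: hK.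
    by rewrite /tau ffunE hK.
  have nc0 : forall k0 c, k0 \in J -> (forall k, k \in J ->
      Ep (Pc c) k = [ffun k => if k == k0 then 1%R else tau k] k) -> c != c0.
    move=> k0 c k0J Hc; apply/eqP => e; have := Hc k0 k0J.
    by rewrite e Pc0 Ep0 ffunE eqxx => /eqP; rewrite eq_sym oner_eq0.
  have c12 : c1 != c2.
    apply/eqP => e; have := H1 k2 k2J; rewrite e H2 // !ffunE eqxx.
    rewrite eq_sym (negbTE k12); have := eqP (Z k2 k2J); rewrite ffunE => ->.
    by move/eqP; rewrite oner_eq0.
  case: (eqVneq c1 u1) => [e|n1].
    apply: (goodrow (c := c2)); last exact: good H2.
    by apply: inS; [exact: nc0 H2 | rewrite -e eq_sym].
  by apply: (goodrow (c := c1)); [apply: inS => //; exact: nc0 H1 | exact: good H1].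
move: NZ; rewrite negb_forall_in => /exists_inP [k0 k0J nz].
have [c Hc] := surj aJ cJ tau.
apply: (goodrow (c := c)); last by move=> k kJ; rewrite Hc // /tau ffunE hK.
apply: inS; apply/eqP => e.
  by move: nz; rewrite -Hc // e Pc0 Ep0 eqxx.
have := Ep1 k0; rewrite -Pu1 -e Hc //.
move: nz (hinv_neq1 (f k0)); rewrite /tau ffunE.
by move=> /negbTE -> /negbTE ->.
Qed.

End Construction.

Theorem corollary3 (q t : nat) :
  (exists p k : nat, [/\ prime p, 0 < k & q = p ^ k]) ->
  2 <= t ->
  OCAN t (q + 1) t (q - 1) <= q ^ t - 2.
Proof.
move=> [p [k [pp k0 ->]]] t2.
have [F _ cF] := pPrimePowerField pp k0.
rewrite /OCAN; case: ex_minnP => m _ min; apply: min.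
by rewrite -cF -(cardS F t2); exact: OCA_main.
Qed.
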